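(* Let $\mathcal{M}=\{1,\dots,M\}$ be masters and $\mathcal{N}=\{1,\dots,N\}$ workers, $N>M$, with parameters $L_m>0$, $u_{m,n}>0$, $a_{m,n}>0$. For $k_{m,n}\in\{0,1\}$ and $l_{m,n}\ge 0$ define $$\mathbb{E}[X_m(t)]=\sum_{n=1}^N \mathbb{E}[X_{m,n}(t)],\qquad \mathbb{E}[X_{m,n}(t)]=\begin{cases}k_{m,n}l_{m,n}\left[1-e^{-\frac{u_{m,n}}{l_{m,n}}(t-a_{m,n}l_{m,n})}\right], & k_{m,n}>0,\ t\ge a_{m,n}l_{m,n},\\ 0,&\text{otherwise}.\end{cases}$$ Consider the dedicated worker-assignment problem $$\mathcal{P}2:\ \min_{\{l_{m,n},k_{m,n},t\}} t\quad\text{s.t.}\quad L_m-\mathbb{E}[X_m(t)]\le 0\ \forall m,\quad \sum_{m=1}^M k_{m,n}\le 1\ \forall n,\quad k_{m,n}\in\{0,1\},\ l_{m,n}\ge 0\ \forall m,n.$$ Let $\phi_{m,n}=\frac{1}{u_{m,n}}\left[-\mathcal{W}_{-1}(-e^{-u_{m,n}a_{m,n}-1})-1\right]$, where $\mathcal{W}_{-1}$ is the lower branch of the Lambert W function, and $v_{m,n}=\frac{u_{m,n}}{L_m(1+u_{m,n}\phi_{m,n})}$. Then $\mathcal{P}2$ is equivalent to the max-min allocation problem $$\mathcal{P}5:\ \max_{\{k_{m,n}\}}\ \min_{m\in\mathcal{M}}\sum_{n=1}^N k_{m,n}v_{m,n}\quad\text{s.t.}\quad \sum_{m=1}^M k_{m,n}\le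 1,\ k_{m,n}\in\{0,1\}\ \forall m,n,$$ in the sense that minimizing over loads for each fixed assignment, the minimum value of $t$ for the assignment $\{k_{m,n}\}$ equals $1/\min_{m}\sum_n k_{m,n}v_{m,n}$; hence an assignment is optimal for $\mathcal{P}2$ iff it is optimal for $\mathcal{P}5$, and the optimal value of $\mathcal{P}2$ is the reciprocal of that of $\mathcal{P}5$.
   Context: Each master $m$ has a matrix-vector multiplication task with $L_m$ rows, MDS-coded; worker $n$ is dedicated to at most one master ($k_{m,n}=1$ iff worker $n$ serves master $m$) and computes $l_{m,n}$ coded rows; the processing time of worker $n$ on $l$ rows for master $m$ is shifted exponential with $\mathbb{P}[T\le t]=1-e^{-\frac{u_{m,n}}{l}(t-a_{m,n}l)}$ for $t\ge a_{m,n}l$. A master receives either all $l_{m,n}$ results of worker $n$ or none by time $t$; $X_m(t)$ is the number of results master $m$ has by time $t$. *)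

(* Defs.v *)
From HB Require Import structures.
From mathcomp Require Import all_boot all_order all_algebra.
From mathcomp Require Import all_classical all_reals all_analysis.
Set Implicit Arguments. Unset Strict Implicit. Unset Printing Implicit Defensive.
Import Order.TTheory GRing.Theory Num.Theory.
Local Open Scope ring_scope.
Local Open Scope classical_set_scope.

Section Defs.
Variable R : realType.

(* Lower branch W_{-1} of the Lambert W function: for x in [-1/e, 0),
   the unique w <= -1 with w * e^w = x (chosen by classical choice;
   outside that domain the value is unspecified). *)
Definition LambertWm1 (x : R) : R :=
  xget 0 [set w : R | w <= -1 /\ w * expR w = x].

Variables (M N : nat).
Variables (L : 'I_M -> R) (u a : 'I_M -> 'I_N -> R).

Definition EXmn (k : 'I_M -> 'I_N -> bool) (l : 'I_M -> 'I_N -> R)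
    (t : R) (m : 'I_M) (n : 'I_N) : R :=
  if k m n && (a m n * l m n <= t) then
    (k m n)%:R * l m n * (1 - expR (- (u m n / l m n) * (t - a m n * l m n)))
  else 0.

Definition EXm k l t (m : 'I_M) : R := \sum_(n < N) EXmn k l t m n.

Definition assignment (k : 'I_M -> 'I_N -> bool) : Prop :=
  forall n : 'I_N, (\sum_(m < M) (k m n : nat) <= 1)%N.

Definition feasibleP2 k l (t : R) : Prop :=
  (forall m, L m - EXm k l t m <= 0) /\ assignment k /\
  (forall m n, 0 <= l m n).

Definition optimalP2 k l t : Prop :=
  feasibleP2 k l t /\ forall k' l' t', feasibleP2 k' l' t' -> t <= t'.

Definition phi (m : 'I_M) (n : 'I_N) : R :=
  (u m n)^-1 * (- LambertWm1 (- expR (- (u m n * a m n) - 1)) - 1).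

Definition v (m : 'I_M) (n : 'I_N) : R :=
  u m n / (L m * (1 + u m n * phi m n)).

(* objective of P5: min over masters of sum_n k_{m,n} v_{m,n}
   (computed in the extended reals, then made real; finite when 0 < M) *)
Definition objP5 (k : 'I_M -> 'I_N -> bool) : R :=
  fine (\big[Order.min/+oo%E]_(m < M) (\sum_(n < N) (k m n)%:R * v m n)%:E).

Definition optimalP5 k : Prop :=
  assignment k /\ forall k', assignment k' -> objP5 k' <= objP5 k.

End Defs.

(* Main.v *)
Require Import Defs.
From HB Require Import structures.
From mathcomp Require Import all_boot all_order all_algebra.
From mathcomp Require Import all_classical all_reals all_analysis.
From mathcomp Require Import ring lra.
Import Order.TTheory GRing.Theory Num.Theory.
Import numFieldNormedType.Exports.
Local Open Scope ring_scope.

Lemma fcont (R : realType) : continuous (fun w : R => w * expR w).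
Proof. move=> w; apply: (@continuousM _ _ id expR w) => //. exact: continuous_expR. Qed.

Lemma W_exists (R : realType) (b : R) : 0 < b ->
  exists w : R, w <= -1 /\ w * expR w = - expR (- b - 1).
Proof.
move=> hb.
set w0 := - (3 * b + 3).
have hw0 : w0 <= -1 by rewrite /w0; lra.
have h1 : (fun w : R => w * expR w) (-1) <= - expR (- b - 1).
  rewrite /= mulN1r lerN2; rewrite ler_expR; lra.
have h2 : - expR (- b - 1) <= (fun w : R => w * expR w) w0.
  rewrite /= /w0 mulNr lerN2.
  have e1 : expR (- b - 1) = expR (- (3 * b + 3)) * expR (2 * b + 2).
    by rewrite -expRD; congr expR; lra.
  rewrite e1 mulrC ler_pM2l ?expR_gt0 //.
  have e2 : expR (2 * b + 2) = expR (b + 1) * expR (b + 1) by rewrite -expRD; congr expR; lra.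
  have e3 := expR_ge1Dx (b + 1).
  rewrite e2. nra.
have hv : Num.min ((fun w : R => w * expR w) w0) ((fun w : R => w * expR w) (-1)) <= - expR (- b - 1) <=
   Num.max ((fun w : R => w * expR w) w0) ((fun w : R => w * expR w) (-1)).
  by rewrite ge_min h1 orbT le_max h2.
have [c hc hfc] := @IVT R (fun w => w * expR w) w0 (-1) (- expR (- b - 1)) hw0
  (continuous_subspaceT (@fcont R)) hv.
exists c; split => //.
by move: hc; rewrite in_itv /= => /andP[].
Qed.

Lemma x_spec (R : realType) (b : R) : 0 < b ->
  let x := - LambertWm1 (- expR (- b - 1)) - 1 in
  0 < x /\ b < x /\ expR x = (1 + x) * expR b.
Proof.
move=> hb x.
have [hw1 hw2] : LambertWm1 (- expR (- b - 1)) <= -1 /\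
    LambertWm1 (- expR (- b - 1)) * expR (LambertWm1 (- expR (- b - 1))) = - expR (- b - 1).
  rewrite /LambertWm1; set P := (X in xget 0 X); have : P (xget 0 P) by apply: xgetPex; exact: W_exists.
  by [].

have hw : LambertWm1 (- expR (- b - 1)) = - (1 + x) by rewrite /x; lra.
rewrite hw in hw1 hw2.
have hx0 : 0 <= x by lra.
have H : (1 + x) * expR (- (1 + x)) = expR (- b - 1) by rewrite -[RHS]opprK -hw2 mulNr opprK.
have Hx : expR x = (1 + x) * expR b.
  have -> : x = (- b - 1) + (x + 1 + b) by lra.
  rewrite expRD -H -mulrA -expRD; congr (_ * expR _); lra.
have xpos : 0 < x.
  rewrite lt_neqAle hx0 andbT; apply/eqP => x0.
  have := pexpR_gt1 hb; move: Hx; rewrite -x0 expR0 addr0 mul1r => <-.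
  by rewrite ltxx.
split => //; split => //.
have : expR b < expR x by rewrite Hx ltr_pMl ?expR_gt0 //; lra.
by rewrite ltr_expR.
Qed.

Lemma term_le (R : realType) (bb : bool) (u a l t x : R) : 0 < u -> 0 < a -> 0 < t ->
  0 <= l -> 0 < x -> expR x = (1 + x) * expR (u * a) ->
  (if bb && (a * l <= t) then bb%:R * l * (1 - expR (- (u / l) * (t - a * l))) else 0)
   <= bb%:R * (t * u / (1 + x)).
Proof.
move=> hu ha ht hl hx hex.
have hq : 0 <= t * u / (1 + x) by apply: divr_ge0; [nra|lra].
case: bb => /=; last by rewrite mul0r.
case: ifP => _; last by rewrite mul1r.
rewrite !mul1r.
have [l0|lpos] := eqVneq l 0; first by rewrite l0 mul0r.
have lp : 0 < l by rewrite lt_neqAle eq_sym lpos hl.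
set z := u * t / l.
have hexp : - (u / l) * (t - a * l) = u * a - z by rewrite /z; field; rewrite lpos.
rewrite hexp.
set E := expR (x - z).
have hE : expR (u * a - z) = E / (1 + x).
  rewrite /E !expRD hex; field; lra.
rewrite hE.
have hE2 := expR_ge1Dx (x - z); rewrite -/E in hE2.
have hlz : l * z = u * t by rewrite /z; field; rewrite lpos.
rewrite -subr_ge0.
have -> : t * u / (1 + x) - l * (1 - E / (1 + x)) = (t * u - l * (1 + x) + l * E) / (1 + x).
  field; lra.
apply: divr_ge0; last lra.
nra.
Qed.

Lemma term_eq (R : realType) (u a t x : R) : 0 < u -> 0 < a -> 0 < t ->
  0 < x -> u * a < x -> expR x = (1 + x) * expR (u * a) ->
  (if true && (a * (t * u / x) <= t) then
     true%:R * (t * u / x) * (1 - expR (- (u / (t * u / x)) * (t - a * (t * u / x)))) else 0)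
   = t * u / (1 + x).
Proof.
move=> hu ha ht hx hb hex.
have -> : a * (t * u / x) <= t.
  rewrite -subr_ge0.
  have -> : t - a * (t * u / x) = t * (x - u * a) / x by field; lra.
  apply: divr_ge0; [nra|lra].
rewrite /= mul1r.
have -> : - (u / (t * u / x)) * (t - a * (t * u / x)) = - (x - u * a).
  by field; rewrite (gt_eqF hx) (gt_eqF hu) (gt_eqF ht).
rewrite expRN.
have -> : expR (x - u * a) = 1 + x.
  by rewrite expRD hex expRN; field; rewrite (gt_eqF (expR_gt0 _)).
have hx1 : 0 < 1 + x by lra.
by rewrite /=; field; rewrite (gt_eqF hx) (gt_eqF hx1).
Qed.

Lemma term_nonpos (R : realType) (bb : bool) (u a l t : R) : 0 < a -> t <= 0 ->
  0 <= l ->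
  (if bb && (a * l <= t) then bb%:R * l * (1 - expR (- (u / l) * (t - a * l))) else 0) <= 0.
Proof.
move=> ha ht hl.
case: ifP => // /andP[_ h].
have -> : l = 0 by nra.
by rewrite mulr0 mul0r.
Qed.

Lemma inv_le (R : realType) (p q : R) : 0 < p -> 0 < q -> (p^-1 <= q^-1) = (q <= p).
Proof. move=> hp hq. by rewrite ler_pV2 // inE /= ?unitfE ?gt_eqF ?hp ?hq. Qed.

Theorem proposition1 (R : realType) (M N : nat)
  (L : 'I_M -> R) (u a : 'I_M -> 'I_N -> R)
  (hM : (0 < M)%N) (hNM : (M < N)%N)
  (hL : forall m, 0 < L m)
  (hu : forall m n, 0 < u m n) (ha : forall m n, 0 < a m n) :
  (* for each fixed assignment, the minimal t over loads is 1 / objP5 k *)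
  (forall k, assignment k ->
     (forall l t, feasibleP2 L u a k l t ->
        0 < objP5 L u a k /\ (objP5 L u a k)^-1 <= t) /\
     (0 < objP5 L u a k -> exists l, feasibleP2 L u a k l (objP5 L u a k)^-1)) /\
  (* an assignment is optimal for P2 iff it is optimal for P5 *)
  (forall k, (exists l t, optimalP2 L u a k l t) <-> optimalP5 L u a k) /\
  (* optimal values are reciprocal *)
  (exists k l t, optimalP2 L u a k l t) /\
  (forall k l t k', optimalP2 L u a k l t -> optimalP5 L u a k' ->
     t = (objP5 L u a k')^-1).
Proof.
pose x m n := u m n * phi u a m n.
have xs : forall m n, 0 < x m n /\ u m n * a m n < x m n /\
    expR (x m n) = (1 + x m n) * expR (u m n * a m n).
  move=> m n; have := @x_spec R _ (mulr_gt0 (hu m n) (ha m n)).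
  by rewrite /x /phi mulrA mulfV ?mul1r // gt_eqF.
have Lv : forall m n, L m * v L u a m n = u m n / (1 + x m n).
  move=> m n; rewrite /v -/(x m n); have [x0 _] := xs m n.
  field; rewrite (gt_eqF (hL m)); have -> : (1 + x m n == 0) = false by apply: gt_eqF; lra.
  by [].
have vpos : forall m n, 0 < v L u a m n.
  move=> m n; have [x0 _] := xs m n.
  have : 0 < L m * v L u a m n by rewrite Lv; apply: divr_gt0 => //; lra.
  by rewrite pmulr_rgt0.
pose S (k : 'I_M -> 'I_N -> bool) m := \sum_(n < N) (k m n)%:R * v L u a m n.
have Sge0 : forall k m, 0 <= S k m.
  by move=> k m; apply: sumr_ge0 => n _; apply: mulr_ge0 => //; exact: ltW.
have objE : forall k, exists m, objP5 L u a k = S k m /\ forall m', S k m <= S k m'.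
  move=> k; case: (@arg_minP _ _ 'I_M (Ordinal hM) xpredT (S k)) => // ms _ Hms.
  exists ms; split; last by move=> m'; exact: Hms.
  have hb : (\big[Order.min/+oo%E]_(m < M) (S k m)%:E = (S k ms)%:E).
    apply/le_anti/andP; split; first exact: bigmin_le.
    apply: le_bigmin => [|i _]; first exact: leey.
    by rewrite lee_fin; apply: Hms.
  by rewrite /objP5 hb.
have upper : forall k l t m, 0 < t -> (forall m n, 0 <= l m n) ->
    EXm u a k l t m <= t * L m * S k m.
  move=> k l t m ht hl; rewrite /EXm /S mulr_sumr; apply: ler_sum => n _.
  have [x0 [_ hex]] := xs m n.
  apply: le_trans (@term_le R (k m n) _ _ _ _ _ (hu m n) (ha m n) ht (hl m n) x0 hex) _.
  rewrite (_ : t * L m * _ = (k m n)%:R * (t * (L m * v L u a m n))); last by ring.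
  by rewrite Lv !mulrA.
have exeq : forall k t m, 0 < t ->
    EXm u a k (fun m n => t * u m n / x m n) t m = t * L m * S k m.
  move=> k t m ht; rewrite /EXm /S mulr_sumr; apply: eq_bigr => n _.
  have [x0 [hb hex]] := xs m n.
  rewrite /EXmn; case: (k m n).
    rewrite (@term_eq R _ _ _ _ (hu m n) (ha m n) ht x0 hb hex) (_ : t * L m * _ = t * (L m * v L u a m n)).
      by rewrite Lv mulrA.
    by rewrite -mulrA; congr (_ * (_ * _)); exact: mul1r.
  by rewrite /= !mul0r mulr0.
have nonpos : forall k l t m, t <= 0 -> (forall m n, 0 <= l m n) -> EXm u a k l t m <= 0.
  move=> k l t m ht hl; apply: sumr_le0 => n _.
  exact: (@term_nonpos R (k m n) _ _ _ _ (ha m n)) ht (hl m n).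
have P1a : forall k l t, feasibleP2 L u a k l t ->
    0 < objP5 L u a k /\ (objP5 L u a k)^-1 <= t.
  move=> k l t [hf [_ hl]].
  have tpos : 0 < t.
    rewrite ltNge; apply/negP => ht.
    have := hf (Ordinal hM); have := nonpos k l t (Ordinal hM) ht hl.
    have := hL (Ordinal hM); lra.
  have hS : forall m, 1 <= t * S k m.
    move=> m; have := hf m; have := upper k l t m tpos hl; have := hL m; nra.
  have [ms [-> _]] := objE k.
  have h1 := hS ms.
  have Spos : 0 < S k ms by nra.
  by split => //; rewrite -div1r ler_pdivrMr.
have P1b : forall k, assignment k -> 0 < objP5 L u a k ->
    feasibleP2 L u a k (fun m n => (objP5 L u a k)^-1 * u m n / x m n) (objP5 L u a k)^-1.
  move=> k hk hpos; have [ms [hobj hmin]] := objE k.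
  rewrite hobj in hpos *.
  split; [|split] => //.
    move=> m; rewrite exeq ?invr_gt0 //.
    have e : (S k ms)^-1 * L m * S k m = L m * (S k m / S k ms) by rewrite /S; ring.
    rewrite e.
    have : 1 <= S k m / S k ms by rewrite ler_pdivlMr // mul1r.
    have := hL m; nra.
  move=> m n; have [x0 _] := xs m n.
  apply: divr_ge0; last exact: ltW.
  apply: mulr_ge0; last exact: ltW.
  by rewrite invr_ge0; exact: ltW.
pose k0 (m : 'I_M) (n : 'I_N) := (val m == val n).
have asg0 : assignment k0.
  move=> n; rewrite /k0; case: (ltnP n M) => h.
    rewrite (bigD1 (Ordinal h)) //= eqxx big1 // => i hi.
    have -> : (val i == val n) = false.
      by apply/negbTE; apply: contra hi => /eqP e; apply/eqP/val_inj.
    by [].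
  rewrite big1 // => i _.
  have -> : (val i == val n) = false.
    apply/negbTE; rewrite neq_ltn; apply/orP; left.
    exact: leq_trans (ltn_ord i) h.
  by [].
have obj0 : 0 < objP5 L u a k0.
  have [ms [-> _]] := objE k0.
  rewrite /S (bigD1 (widen_ord (ltnW hNM) ms)) //=.
  set w := widen_ord _ ms.
  have ht : 0 < (k0 ms w)%:R * v L u a ms w by rewrite /k0 /= eqxx mul1r.
  have hs : 0 <= \sum_(i < N | i != w) (k0 ms i)%:R * v L u a ms i.
    by apply: sumr_ge0 => n _; apply: mulr_ge0 => //; exact: ltW.
  lra.
have P2 : forall k, (exists l t, optimalP2 L u a k l t) -> optimalP5 L u a k.
  move=> k [l [t [hf hopt]]].
  have [ho1 ho2] := P1a _ _ _ hf.
  split; first exact: hf.2.1.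
  move=> k' hk'.
  case: (lerP (objP5 L u a k') 0) => h'; first exact: le_trans h' (ltW ho1).
  have := hopt _ _ _ (P1b k' hk' h') => h3.
  by rewrite -inv_le //; exact: le_trans ho2 h3.
have P5 : forall k, optimalP5 L u a k -> exists l t, optimalP2 L u a k l t.
  move=> k [hk hopt].
  have pos : 0 < objP5 L u a k by apply: lt_le_trans obj0 (hopt _ asg0).
  exists (fun m n => (objP5 L u a k)^-1 * u m n / x m n), (objP5 L u a k)^-1.
  split; first exact: P1b.
  move=> k' l' t' hf'.
  have [ho1 ho2] := P1a _ _ _ hf'.
  apply: le_trans ho2.
  by rewrite inv_le //; apply: hopt; exact: hf'.2.1.
have ex5 : exists k, optimalP5 L u a k.
  pose tok (kk : {ffun 'I_M * 'I_N -> bool}) := fun m n => kk (m, n).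
  pose P := [pred kk : {ffun 'I_M * 'I_N -> bool} |
     [forall n : 'I_N, (\sum_(m < M) (kk (m, n) : nat) <= 1)%N]].
  pose F kk := objP5 L u a (tok kk).
  have tokK : forall k, tok [ffun p => k p.1 p.2] = k.
    by move=> k; apply/funext => m; apply/funext => n; rewrite /tok ffunE.
  have Pk : forall k, assignment k -> P [ffun p => k p.1 p.2].
    move=> k hk; rewrite /P inE; apply/forallP => n.
    by under eq_bigr => m _ do rewrite ffunE; exact: hk n.
  case: (@arg_maxP _ _ {ffun 'I_M * 'I_N -> bool} [ffun p => k0 p.1 p.2] P F (Pk _ asg0))
    => kb Pkb Hmax.
  exists (tok kb); split.
    by move=> n; move: Pkb; rewrite /P inE => /forallP /(_ n).
  move=> k' hk'; have := Hmax _ (Pk _ hk'); rewrite /F tokK.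
  by [].
split.
  move=> k hk; split; first exact: P1a.
  by move=> hpos; eexists; exact: P1b hk hpos.
split; first by move=> k; split; [exact: P2 | exact: P5].
split.
  have [k hk] := ex5; have [l [t h]] := P5 k hk; by exists k, l, t.
move=> k l t k' Hopt Hk'.
have Hk := P2 k (ex_intro _ l (ex_intro _ t Hopt)).
have eobj : objP5 L u a k = objP5 L u a k'.
  apply/le_anti/andP; split.
    by apply: Hk'.2; exact: Hk.1.
  by apply: Hk.2; exact: Hk'.1.
rewrite -eobj.
have [ho1 ho2] := P1a _ _ _ Hopt.1.
apply/le_anti/andP; split => //.
exact: Hopt.2 _ _ _ (P1b _ Hk.1 ho1).
Qed.
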